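(* Let $\phi:\mathbb{R}^{K+J}\times[K+J]\to\mathbb{R}_{\ge 0}$ be such that $\theta\mapsto\phi(\theta,i)$ is continuous on $\mathbb{R}^{K+J}$ for every $i\in[K+J]$, and suppose $\phi$ is symmetric with respect to its last $J$ inputs. Then for every $y\in[K]$ and every $m\in[K]^J$, the map $\theta\mapsto\widetilde{\ell}_\phi(\theta,y,m)$ is continuous on $\mathbb{R}^{K+J}$.
   Context: Fix integers $K\ge 2$ (number of classes) and $J\ge 1$ (number of experts); $[n]=\{1,\dots,n\}$. For a finite index set $I$ and reals $(a_i)_{i\in I}$, $\operatorname{argmax}_{i\in I}a_i$ denotes a single maximizer chosen by a fixed deterministic tie-breaking rule. For $y\in[K]$ and $m=(m_1,\dots,m_J)\in[K]^J$, let $[m=y]=\{j\in[J]: m_j=y\}$. Given a multiclass loss $\phi:\mathbb{R}^{K+J}\times[K+J]\to\mathbb{R}_{\ge0}$, the PiCCE loss is $$\widetilde{\ell}_\phi(\theta,y,m)=\phi(\theta,y)+\phi\Big(\theta,\ \operatorname{argmax}_{j\in[m=y]}\theta_{j+K}+K\Big),\quad \theta\in\mathbb{R}^{K+J},$$ where the second term is defined to be $0$ when $[m=y]=\emptyset$. Write $\boldsymbol{\phi}(\theta)=(\phi(\theta,1),\dots,\phi(\theta,K+J))^\top$. The loss $\phi$ is called symmetric with respect to its last $J$ inputs if $P\boldsymbol{\phi}(\theta)=\boldsymbol{\phi}(P\theta)$ for all $\theta\in\mathbb{R}^{K+J}$ and all $(K+J)\times(K+J)$ permutation matrices $P$ with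 $P_{i,i}=1$ for all $i\in[K]$ (i.e. permutations fixing the first $K$ coordinates). *)

(* Defs.v *)
From HB Require Import structures.
From mathcomp Require Import all_boot all_order all_algebra all_fingroup.
From mathcomp Require Import all_classical all_reals all_analysis.
Set Implicit Arguments. Unset Strict Implicit. Unset Printing Implicit Defensive.
Import Order.TTheory GRing.Theory Num.Theory.
Import numFieldNormedType.Exports.
Local Open Scope ring_scope.

(* Index i : 'I_(K+J); class y : 'I_K is output (lshift J y) (= y in [K]),
   expert j : 'I_J is output (rshift K j) (= j + K).  *)

Definition argmax_rule (R : realType) (J : nat)
  (sel : {set 'I_J} -> ('I_J -> R) -> 'I_J) : Prop :=
  forall (A : {set 'I_J}) (v : 'I_J -> R), A != finset.set0 ->
    sel A v \in A /\ (forall j, j \in A -> v j <= v (sel A v)).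

Definition bphi (R : realType) (n : nat) (phi : 'cV[R]_n -> 'I_n -> R)
  (theta : 'cV[R]_n) : 'cV[R]_n := \col_i phi theta i.

Definition sym_last (R : realType) (K J : nat)
  (phi : 'cV[R]_(K + J) -> 'I_(K + J) -> R) : Prop :=
  forall (P : 'M[R]_(K + J)), is_perm_mx P ->
    (forall i : 'I_K, P (lshift J i) (lshift J i) = 1) ->
    forall theta : 'cV[R]_(K + J), P *m bphi phi theta = bphi phi (P *m theta).

Definition agree_set (K J : nat) (y : 'I_K) (m : 'I_J -> 'I_K) : {set 'I_J} :=
  [set j | m j == y].

Definition picce (R : realType) (K J : nat)
  (sel : {set 'I_J} -> ('I_J -> R) -> 'I_J)
  (phi : 'cV[R]_(K + J) -> 'I_(K + J) -> R)
  (theta : 'cV[R]_(K + J)) (y : 'I_K) (m : 'I_J -> 'I_K) : R :=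
  phi theta (lshift J y) +
  (if agree_set y m == finset.set0 then 0
   else phi theta (rshift K (sel (agree_set y m) (fun j => theta (rshift K j) 0)))).

(* Main.v *)
Require Import Defs.
From HB Require Import structures.
From mathcomp Require Import all_boot all_order all_algebra all_fingroup.
From mathcomp Require Import all_classical all_reals all_analysis.
Import Order.TTheory GRing.Theory Num.Theory.
Import numFieldNormedType.Exports.
Local Open Scope ring_scope.
Set Warnings "-all".

Lemma sym_eq_phi (R : realType) (K J : nat) (phi : 'cV[R]_(K + J) -> 'I_(K + J) -> R)
  (phi_sym : sym_last phi) (theta : 'cV[R]_(K + J)) (j j0 : 'I_J) :
  theta (rshift K j) 0 = theta (rshift K j0) 0 ->
  phi theta (rshift K j) = phi theta (rshift K j0).
Proof.
move=> eqv.
pose s : 'S_(K + J) := tperm (rshift K j) (rshift K j0).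
have hs : forall i, theta (s i) 0 = theta i 0.
  move=> i; rewrite /s; case: tpermP => [->|->|]//.
have hl : forall i : 'I_K, s (lshift J i) = lshift J i.
  move=> i; rewrite /s tpermD //; apply/eqP => /(congr1 val) /=;
  by move=> h; move: (ltn_ord i); rewrite -h ltnNge leq_addr.
have hP : forall i : 'I_K, (perm_mx (R:=R) s) (lshift J i) (lshift J i) = 1.
  by move=> i; rewrite /perm_mx mxE !mxE hl eqxx.
have := phi_sym (perm_mx (R:=R) s) (perm_mx_is_perm R s) hP theta.
rewrite -!row_permE.
have -> : row_perm s theta = theta by apply/matrixP => a b; rewrite mxE ord1 hs.
move=> /(congr1 (fun M : 'cV[R]_(K + J) => M (rshift K j) 0)).
rewrite mxE /bphi !mxE /s tpermL => <- //.
Qed.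

Theorem theorem1 (R : realType) (K J : nat) (hK : (2 <= K)%N) (hJ : (1 <= J)%N)
  (sel : {set 'I_J} -> ('I_J -> R) -> 'I_J) (hsel : argmax_rule sel)
  (phi : 'cV[R]_(K + J) -> 'I_(K + J) -> R)
  (phi_ge0 : forall theta i, 0 <= phi theta i)
  (phi_cont : forall i, continuous (fun theta => phi theta i))
  (phi_sym : sym_last phi) :
  forall (y : 'I_K) (m : 'I_J -> 'I_K),
    continuous (fun theta => picce sel phi theta y m).
Proof.
move=> y m theta0; rewrite /picce.
case hA: (agree_set y m == finset.set0).
  have -> : (fun theta : 'cV[R]_(K + J) => phi theta (lshift J y) + 0) = (fun theta => phi theta (lshift J y)) by apply/funext => t; rewrite addr0.
  exact: phi_cont.
apply: (cvgD (phi_cont _ theta0)).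
have hA' : agree_set y m != finset.set0 by rewrite hA.
set A := agree_set y m.
pose v (t : 'cV[R]_(K + J)) (j : 'I_J) : R := t (rshift K j) 0.
rewrite -/(v theta0).
under eq_fun do rewrite -/(v _).
set g := fun t => phi t (rshift K (sel A (v t))).
rewrite -/(g theta0).
apply/cvgrPdist_lt => e e0.
set j0 := sel A (v theta0).
have [j0A j0max] := hsel A (v theta0) hA'.
have S1 : \forall t \near theta0, forall j, v theta0 j < v theta0 j0 -> v t j < v t j0.
  apply: (@filter_forall _ _ (fun j t => v theta0 j < v theta0 j0 -> v t j < v t j0) (nbhs theta0) _) => j.
  have [hlt|hge] := ltP (v theta0 j) (v theta0 j0); last first.
    by apply: nearW.
  have := @cvgr_gt _ _ _ (nbhs_filter theta0) (fun t => v t j0 - v t j) _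
    (cvgB (@coord_continuous _ _ _ (rshift K j0) 0 theta0) (@coord_continuous _ _ _ (rshift K j) 0 theta0)) 0.
  move=> /(_ (nbhs_filter _)); rewrite subr_gt0 => /(_ hlt).
  by apply: filterS => t; rewrite subr_gt0.
have S2 : \forall t \near theta0, forall j, v theta0 j = v theta0 j0 ->
    `|g theta0 - phi t (rshift K j)| < e.
  apply: (@filter_forall _ _ (fun j t => v theta0 j = v theta0 j0 ->
    `|g theta0 - phi t (rshift K j)| < e) (nbhs theta0) _) => j.
  have [heq|hne] := eqVneq (v theta0 j) (v theta0 j0); last first.
    by apply: nearW => t /eqP; rewrite (negbTE hne).
  rewrite /g -/j0 -(@sym_eq_phi R K J phi phi_sym theta0 j j0 heq).
  have := @cvgr_dist_lt _ _ _ _ (nbhs_filter theta0) _ _ (phi_cont (rshift K j) theta0) e e0.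
  by apply: filterS => t h _.
move: S1 S2; apply: filterS2 => t hS1 hS2.
have [sA smax] := hsel A (v t) hA'.
apply: hS2.
apply/le_anti; rewrite j0max //=.
rewrite leNgt; apply/negP => /hS1 hlt.
by have := smax j0 j0A; rewrite leNgt hlt.
Qed.
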